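(* Let $q=2^h$. In ${\rm PG}(4,q)$ with homogeneous coordinates $(X_1,\dots,X_5)$ let $\ell$ be the line $X_1=X_4=X_5=0$, $\Sigma$ the solid $X_1=0$, and $\mathcal H$ the hyperbolic quadric of $\Sigma$ with equation $X_2X_5+X_3X_4=0$. Let $\mathcal W(3,q)$ be the symplectic polar space of $\Sigma$ whose lines are the lines of $\Sigma$ totally isotropic for $B(x,y)=x_2y_5+x_5y_2+x_3y_4+x_4y_3$, and let $\mathcal T$ be the set of lines of $\mathcal W(3,q)$ having exactly one point in common with $\mathcal H\setminus\ell$. Let $\alpha\in{\rm GF}(q)$ be such that $X^2+X+\alpha$ is irreducible over ${\rm GF}(q)$ and let $G=\{M_{a,b,c,d}: a\in{\rm GF}(q)\setminus\{0\},\ b,c,d\in{\rm GF}(q),\ c^2+cd+\alpha d^2=1\}$, where $$M_{a,b,c,d}=\begin{pmatrix}1&0&0&0&0\\0&ac&\alpha ad&bc&\alpha bd\\0&ad&a(c+d)&bd&b(c+d)\\0&0&0&a^{-1}c&\alpha a^{-1}d\\0&0&0&a^{-1}d&a^{-1}(c+d)\end{pmatrix},$$ acting on points (column vectors) by left multiplication. Then $G$ acts transitively on $\mathcal T$. *)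

(* Defs.v *)
(* Vectors of F^5 are row vectors 'rV[F]_5, coordinates X1..X5 are the
   entries 0..4.  Subspaces are row spaces (mxalgebra, %MS).  A line of
   PG(4,q) is a 2-dimensional subspace, given by L : 'M[F]_(2,5) of rank 2.
   The matrix M acts on column vectors x |-> M x; in row form this is
   x^T |-> x^T M^T, so the image of the line L is the row space of L *m M^T. *)
From HB Require Import structures.
From mathcomp Require Import all_boot all_order all_algebra all_field.
Set Implicit Arguments. Unset Strict Implicit. Unset Printing Implicit Defensive.
Import Order.TTheory GRing.Theory.
Local Open Scope ring_scope.

Section PG4.
Variable F : finFieldType.

Definition ell : 'M[F]_(2,5) := \matrix_(i < 2, j < 5) ((j : nat) == i.+1)%:R.

Definition Sigma : 'M[F]_(4,5) := \matrix_(i < 4, j < 5) ((j : nat) == i.+1)%:R.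

Definition c5 (x : 'rV[F]_5) (k : nat) : F := x 0 (inord k).

Definition Qform (x : 'rV[F]_5) : F := c5 x 1 * c5 x 4 + c5 x 2 * c5 x 3.

Definition Bform (x y : 'rV[F]_5) : F :=
  c5 x 1 * c5 y 4 + c5 x 4 * c5 y 1 + c5 x 2 * c5 y 3 + c5 x 3 * c5 y 2.

Definition onH (x : 'rV[F]_5) : Prop :=
  x != 0 /\ (x <= Sigma)%MS /\ Qform x = 0.

Definition is_line (L : 'M[F]_(2,5)) : Prop := \rank L = 2%N.

Definition W_line (L : 'M[F]_(2,5)) : Prop :=
  is_line L /\ (L <= Sigma)%MS /\
  (forall x y : 'rV[F]_5, (x <= L)%MS -> (y <= L)%MS -> Bform x y = 0).

Definition one_point_H_minus_ell (L : 'M[F]_(2,5)) : Prop :=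
  exists x : 'rV[F]_5,
    [/\ (x <= L)%MS, onH x, ~~ (x <= ell)%MS &
        forall y : 'rV[F]_5, (y <= L)%MS -> onH y -> ~~ (y <= ell)%MS ->
          (y == x)%MS].

Definition inT (L : 'M[F]_(2,5)) : Prop :=
  W_line L /\ one_point_H_minus_ell L.

Definition Mabcd (al a b c d : F) : 'M[F]_5 :=
  \matrix_(i < 5, j < 5)
   match (i : nat), (j : nat) with
   | 0, 0 => 1
   | 1, 1 => a * c | 1, 2 => al * a * d | 1, 3 => b * c | 1, 4 => al * b * d
   | 2, 1 => a * d | 2, 2 => a * (c + d) | 2, 3 => b * d | 2, 4 => b * (c + d)
   | 3, 3 => a^-1 * c | 3, 4 => al * a^-1 * d
   | 4, 3 => a^-1 * d | 4, 4 => a^-1 * (c + d)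
   | _, _ => 0
   end.

Definition inG (al : F) (g : 'M[F]_5) : Prop :=
  exists a b c d : F,
    [/\ a != 0, c ^+ 2 + c * d + al * d ^+ 2 = 1 & g = Mabcd al a b c d].

Definition act (g : 'M[F]_5) (L : 'M[F]_(2,5)) : 'M[F]_(2,5) := L *m g^T.

End PG4.

(* Main.v *)
Require Import Defs.
From HB Require Import structures.
From mathcomp Require Import all_boot all_order all_algebra all_field.
From mathcomp Require Import ring.
Set Implicit Arguments. Unset Strict Implicit. Unset Printing Implicit Defensive.
Import GRing.Theory.
Local Open Scope ring_scope.

Section S.
Variable F : finFieldType.

Definition v5 (x0 x1 x2 x3 x4 : F) : 'rV[F]_5 :=
  \row_(j < 5) nth 0 [:: x0; x1; x2; x3; x4] j.

Lemma c5v5 x0 x1 x2 x3 x4 k : (k < 5)%N ->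
  c5 (v5 x0 x1 x2 x3 x4) k = nth 0 [:: x0; x1; x2; x3; x4] k.
Proof. by move=> hk; rewrite /c5 mxE inordK. Qed.

Lemma c5E (x : 'rV[F]_5) (j : 'I_5) : x 0 j = c5 x j.
Proof. by rewrite /c5 inord_val. Qed.

Lemma v5E (x : 'rV[F]_5) : x = v5 (c5 x 0) (c5 x 1) (c5 x 2) (c5 x 3) (c5 x 4).
Proof.
apply/rowP => j; rewrite mxE c5E.
by case: j => [[|[|[|[|[|j]]]]] //= Hj].
Qed.

Lemma eq5P (x y : 'rV[F]_5) : c5 x 0 = c5 y 0 -> c5 x 1 = c5 y 1 ->
  c5 x 2 = c5 y 2 -> c5 x 3 = c5 y 3 -> c5 x 4 = c5 y 4 -> x = y.
Proof. by move=> h0 h1 h2 h3 h4; rewrite (v5E x) (v5E y) h0 h1 h2 h3 h4. Qed.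

Lemma c5D (x y : 'rV[F]_5) k : c5 (x + y) k = c5 x k + c5 y k.
Proof. by rewrite /c5 mxE. Qed.
Lemma c5Z (x : 'rV[F]_5) t k : c5 (t *: x) k = t * c5 x k.
Proof. by rewrite /c5 mxE. Qed.
Lemma c5N (x : 'rV[F]_5) k : c5 (- x) k = - c5 x k.
Proof. by rewrite /c5 mxE. Qed.
Lemma c50 k : c5 (0 : 'rV[F]_5) k = 0.
Proof. by rewrite /c5 mxE. Qed.

Variable al : F.

Lemma actE (x : 'rV[F]_5) a b c d :
  x *m (Mabcd al a b c d)^T =
  v5 (c5 x 0)
     (a * c * c5 x 1 + al * a * d * c5 x 2 + b * c * c5 x 3 + al * b * d * c5 x 4)
     (a * d * c5 x 1 + a * (c + d) * c5 x 2 + b * d * c5 x 3 + b * (c + d) * c5 x 4)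
     (a^-1 * c * c5 x 3 + al * a^-1 * d * c5 x 4)
     (a^-1 * d * c5 x 3 + a^-1 * (c + d) * c5 x 4).
Proof.
rewrite {1}(v5E x); apply/rowP => j.
rewrite !mxE !big_ord_recl big_ord0 !mxE /=.
case: j => [[|[|[|[|[|j]]]]] //= Hj]; ring.
Qed.

Lemma subSigmaE (x : 'rV[F]_5) : (x <= Sigma F)%MS = (c5 x 0 == 0).
Proof.
apply/idP/idP.
  case/submxP => D ->; rewrite /c5 !mxE big1 // => i _.
  by rewrite !mxE inordK //= mulr0.
move/eqP => h0; apply/submxP; exists (\row_(i < 4) c5 x i.+1).
apply/rowP => j; rewrite c5E !mxE !big_ord_recl big_ord0 !mxE /=.
case: j => [[|[|[|[|[|j]]]]] //= Hj]; rewrite ?h0; ring.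
Qed.

Lemma subellE (x : 'rV[F]_5) :
  (x <= ell F)%MS = [&& c5 x 0 == 0, c5 x 3 == 0 & c5 x 4 == 0].
Proof.
apply/idP/idP.
  case/submxP => D ->; rewrite /c5 !mxE !big_ord_recl !big_ord0 !mxE !inordK //=.
  by rewrite !mulr0 !addr0 eqxx.
case/and3P => /eqP h0 /eqP h3 /eqP h4; apply/submxP; exists (\row_(i < 2) c5 x i.+1).
apply/rowP => j; rewrite c5E !mxE !big_ord_recl big_ord0 !mxE /=.
case: j => [[|[|[|[|[|j]]]]] //= Hj]; rewrite ?h0 ?h3 ?h4; ring.
Qed.


Definition mk2 (u v : 'rV[F]_5) : 'M[F]_(2,5) :=
  \matrix_(i < 2, j < 5) if (i : nat) == 0%N then u 0 j else v 0 j.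

Lemma row_mk2 u v (i : 'I_2) : row i (mk2 u v) = if (i : nat) == 0%N then u else v.
Proof. by apply/rowP => j; rewrite !mxE; case: ifP. Qed.

Lemma mk2_mul u v (A : 'M[F]_5) : mk2 u v *m A = mk2 (u *m A) (v *m A).
Proof.
apply/row_matrixP => i; rewrite row_mul !row_mk2.
by case: ifP.
Qed.

Lemma comb2 (L : 'M[F]_(2,5)) (w : 'rV[F]_2) :
  w *m L = w 0 0 *: row 0 L + w 0 1 *: row 1 L.
Proof. rewrite mulmx_sum_row !big_ord_recl big_ord0 addr0. by congr (w 0 _ *: row _ L + w 0 _ *: row _ L); apply/val_inj. Qed.

Lemma rank_mk2 u v : c5 u 3 * c5 v 4 - c5 u 4 * c5 v 3 != 0 ->
  \rank (mk2 u v) = 2%N.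
Proof.
move=> hd; suff /eqP : row_free (mk2 u v) by [].
apply: inj_row_free => w hw.
have h k : w 0 0 * c5 u k + w 0 1 * c5 v k = 0.
  by move: hw; rewrite comb2 !row_mk2 /= => /(congr1 (fun x => c5 x k)); rewrite c5D !c5Z c50.
have e0 : w 0 0 * (c5 u 3 * c5 v 4 - c5 u 4 * c5 v 3) = 0.
  have -> : w 0 0 * (c5 u 3 * c5 v 4 - c5 u 4 * c5 v 3) =
    (w 0 0 * c5 u 3 + w 0 1 * c5 v 3) * c5 v 4 - (w 0 0 * c5 u 4 + w 0 1 * c5 v 4) * c5 v 3 by ring.
  by rewrite (h 3%N) (h 4%N) !mul0r subrr.
have e1 : w 0 1 * (c5 u 3 * c5 v 4 - c5 u 4 * c5 v 3) = 0.
  have -> : w 0 1 * (c5 u 3 * c5 v 4 - c5 u 4 * c5 v 3) =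
    (w 0 0 * c5 u 4 + w 0 1 * c5 v 4) * c5 u 3 - (w 0 0 * c5 u 3 + w 0 1 * c5 v 3) * c5 u 4 by ring.
  by rewrite (h 3%N) (h 4%N) !mul0r subrr.
move/eqP: e0; move/eqP: e1; rewrite !mulf_eq0 (negPf hd) !orbF => /eqP e1 /eqP e0.
apply/rowP => j; rewrite mxE; case: j => [[|[|j]] //= Hj].
  by rewrite -e0; congr (w _ _); apply/val_inj.
by rewrite -e1; congr (w _ _); apply/val_inj.
Qed.


Lemma Qform_add (x y : 'rV[F]_5) : Qform (x + y) = Qform x + Qform y + Bform x y.
Proof. rewrite /Qform /Bform !c5D; ring. Qed.

Hypothesis ch2 : (2%N \in [pchar F]).
Let two0 : (2%:R : F) = 0. Proof. exact: pcharf0 ch2. Qed.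
Let oppE (x : F) : - x = x. Proof. exact: oppr_pchar2. Qed.

Definition nrm (c d : F) := c ^+ 2 + c * d + al * d ^+ 2.

Lemma nrm_sub c d : nrm c d = 1 -> c ^+ 2 = 1 - c * d - al * d ^+ 2.
Proof. by rewrite /nrm => <-; ring. Qed.

Lemma Qform_act (x : 'rV[F]_5) a b c d : a != 0 -> nrm c d = 1 ->
  Qform (x *m (Mabcd al a b c d)^T) = Qform x.
Proof.
move=> ha hn; rewrite -[RHS]mulr1 -hn actE /Qform /nrm !c5v5 //=.
by field: two0.
Qed.

Lemma Bform_act (x y : 'rV[F]_5) a b c d : a != 0 -> nrm c d = 1 ->
  Bform (x *m (Mabcd al a b c d)^T) (y *m (Mabcd al a b c d)^T) = Bform x y.
Proof.
move=> ha hn.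
have := Qform_add (x *m (Mabcd al a b c d)^T) (y *m (Mabcd al a b c d)^T).
rewrite -mulmxDl !Qform_act // Qform_add => /eqP.
by rewrite -!addrA !(inj_eq (addrI _)) => /eqP.
Qed.

Lemma Mprod a' b' c' d' a b c d : a' != 0 -> a != 0 ->
  Mabcd al a' b' c' d' * Mabcd al a b c d =
  Mabcd al (a' * a) (a' * b + b' / a) (c' * c + al * d' * d) (c' * d + d' * c + d' * d).
Proof.
move=> ha' ha.
apply/matrixP => i j; rewrite !mxE !big_ord_recl big_ord0 !mxE /=.
case: i => [[|[|[|[|[|i]]]]] //= Hi]; case: j => [[|[|[|[|[|j]]]]] //= Hj].
all: try (field: two0; rewrite ?ha ?ha' //).
Qed.

Lemma M1 : Mabcd al 1 0 1 0 = 1%:M.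
Proof.
apply/matrixP => i j; rewrite !mxE.
case: i => [[|[|[|[|[|i]]]]] //= Hi]; case: j => [[|[|[|[|[|j]]]]] //= Hj].
all: rewrite ?invr1; ring.
Qed.

Lemma nrm_prod c' d' c d : nrm c' d' = 1 -> nrm c d = 1 ->
  nrm (c' * c + al * d' * d) (c' * d + d' * c + d' * d) = 1.
Proof.
move=> h1 h2.
have e : forall c' d' c d : F, (c' * c - al * d' * d) ^+ 2 - (c' * c - al * d' * d) * (c' * d + d' * c - d' * d) + al * (c' * d + d' * c - d' * d) ^+ 2
   = (c' ^+ 2 - c' * d' + al * d' ^+ 2) * (c ^+ 2 - c * d + al * d ^+ 2) by move=> *; ring.
move: (e c' d' c d); rewrite /nrm !oppE => ->.
by move: h1 h2; rewrite /nrm => -> ->; rewrite mulr1.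
Qed.

Lemma Minv_l a b c d : a != 0 -> nrm c d = 1 ->
  Mabcd al a^-1 b (c + d) d * Mabcd al a b c d = 1%:M.
Proof.
move=> ha hn; rewrite Mprod ?invr_eq0 //.
rewrite -M1; congr Mabcd.
- by rewrite mulVf.
- by field: two0.
- by move: hn; rewrite /nrm => <-; ring.
- ring: two0.
Qed.

Lemma Minv_r a b c d : a != 0 -> nrm c d = 1 ->
  Mabcd al a b c d * Mabcd al a^-1 b (c + d) d = 1%:M.
Proof.
move=> ha hn; rewrite Mprod ?invr_eq0 //.
rewrite -M1; congr Mabcd.
- by rewrite mulfV.
- by rewrite invrK; ring: two0.
- by move: hn; rewrite /nrm => <-; ring.
- ring: two0.
Qed.

Lemma nrm_inv c d : nrm c d = 1 -> nrm (c + d) d = 1.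
Proof.
have e : (c - d) ^+ 2 - (c - d) * (- d) + al * (- d) ^+ 2 = c ^+ 2 - c * d + al * d ^+ 2 by ring.
by move: e; rewrite /nrm !oppE => ->.
Qed.

Lemma act0 (x : 'rV[F]_5) a b c d : c5 (x *m (Mabcd al a b c d)^T) 0 = c5 x 0.
Proof. by rewrite actE c5v5. Qed.

Lemma ell_act (x : 'rV[F]_5) a b c d :
  (x <= ell F)%MS -> (x *m (Mabcd al a b c d)^T <= ell F)%MS.
Proof.
rewrite !subellE actE !c5v5 //= => /and3P[/eqP -> /eqP -> /eqP ->].
by rewrite !mulr0 !addr0 eqxx.
Qed.


Lemma sqrtF (y : F) : exists x : F, x ^+ 2 = y.
Proof.
have inj : injective (fun x : F => x ^+ 2).
  move=> x z /= h; apply/eqP; rewrite -subr_eq0.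
  suff : (x - z) ^+ 2 == 0 by rewrite expf_eq0.
  have -> : (x - z) ^+ 2 = x ^+ 2 - z ^+ 2 + 2%:R * (z ^+ 2 - x * z) by ring.
  by rewrite two0 mul0r addr0 h subrr.
have [g _ gK] := injF_bij inj.
by exists (g y); apply: gK.
Qed.

Hypothesis hal : irreducible_poly ('X^2 + 'X + al%:P).

Lemma Nnz c d : (c != 0) || (d != 0) -> nrm c d != 0.
Proof.
apply: contraTT; rewrite negbK negb_or => /eqP h0.
have [d0|dn0] := eqVneq d 0.
  move: h0; rewrite /nrm d0.
  have -> : c ^+ 2 + c * 0 + al * 0 ^+ 2 = c ^+ 2 by ring.
  by move/eqP; rewrite expf_eq0 /= => ->.
exfalso.
have hr : root ('X^2 + 'X + al%:P) (c / d).
  rewrite rootE !hornerE.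
  have -> : (c / d) ^+ 2 + c / d + al = nrm c d / d ^+ 2 by rewrite /nrm; field.
  by rewrite h0 mul0r.
have := hal.2 ('X - (c / d)%:P); rewrite size_XsubC dvdp_XsubCl hr => /(_ isT isT).
move/eqp_size; rewrite size_XsubC -addrA size_addl ?size_polyXn //.
rewrite size_addl ?size_polyX ?size_polyC //.
by case: (al != 0).
Qed.


Lemma eq_mk2 (L : 'M[F]_(2,5)) u v : \rank L = 2%N -> (u <= L)%MS -> (v <= L)%MS ->
  \rank (mk2 u v) = 2%N -> (mk2 u v == L)%MS.
Proof.
move=> rkL uL vL rk.
have sub : (mk2 u v <= L)%MS by apply/row_subP => i; rewrite row_mk2; case: ifP.
by have [_ <-] := mxrank_leqif_eq sub; rewrite rk rkL.
Qed.

Definition L0 := mk2 (v5 0 0 0 1 0) (v5 0 1 0 0 1).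

Lemma orbit (L : 'M[F]_(2,5)) : inT L -> exists a b c d,
  [/\ a != 0, nrm c d = 1 & (L0 *m (Mabcd al a b c d)^T == L)%MS].
Proof.
move=> [[rkL [LS BL]] [P [PL [Pn0 [PS QP]] Pell Pu]]].
have inS y : (y <= L)%MS -> c5 y 0 = 0.
  by move=> yL; apply/eqP; rewrite -subSigmaE (submx_trans yL LS).
pose r0 := row 0 L; pose r1 := row 1 L.
have combL k0 k1 : ((k0 *: r0 + k1 *: r1)%R <= L)%MS.
  by apply: addmx_sub; apply: scalemx_sub; apply: row_sub.
have freeL k0 k1 : k0 *: r0 + k1 *: r1 = 0 -> k0 = 0 /\ k1 = 0.
  move=> h; have fr : row_free L by rewrite /row_free rkL.
  have := mulmx_free_eq0 (\row_(i < 2) (if (i : nat) == 0%N then k0 else k1)) fr.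
  rewrite comb2 !mxE /= h eqxx => /esym/eqP/rowP hw.
  by split; [have := hw 0 | have := hw 1]; rewrite !mxE.
have noell z : (z <= L)%MS -> z != 0 -> c5 z 3 = 0 -> c5 z 4 = 0 -> False.
  move=> zL zn0 z3 z4.
  have Qz : Qform z = 0 by rewrite /Qform z3 z4 !mulr0 addr0.
  have yL : ((P + z)%R <= L)%MS by apply: addmx_sub.
  have yell : ~~ ((P + z)%R <= ell F)%MS.
    apply: contra Pell; rewrite !subellE !c5D z3 z4 (inS _ zL) !addr0.
    by rewrite (inS _ PL) eqxx.
  have yn0 : P + z != 0 by apply: contraNneq yell => ->; rewrite sub0mx.
  have yH : onH (P + z).
    split => //; split; first by rewrite subSigmaE c5D (inS _ PL) (inS _ zL) addr0.
    by rewrite Qform_add QP Qz (BL _ _ PL zL) !addr0.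
  have /andP[/sub_rVP[k hk] _] := Pu _ yL yH yell.
  have hz : z = (k - 1) *: P by rewrite scalerBl scale1r -hk addrC addKr.
  have k1 : k - 1 != 0 by apply: contraNneq zn0 => e; rewrite hz e scale0r.
  apply: (negP Pell); rewrite subellE (inS _ PL) eqxx /=.
  move: z3 z4; rewrite hz !c5Z => /eqP; rewrite mulf_eq0 (negPf k1) /= => ->.
  by move/eqP; rewrite mulf_eq0 (negPf k1).
pose dl := c5 r0 3 * c5 r1 4 - c5 r0 4 * c5 r1 3.
have dn0 : dl != 0.
  apply/negP => /eqP d0.
  have [h4|h4] := eqVneq (c5 r1 4) 0; last first.
    apply: (noell (c5 r1 4 *: r0 + (- c5 r0 4) *: r1)); first exact: combL.
    - by apply/eqP => /freeL [/eqP]; rewrite (negPf h4).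
    - by rewrite c5D !c5Z -d0 /dl; ring.
    - by rewrite c5D !c5Z; ring.
  have [h3|h3] := eqVneq (c5 r1 3) 0; last first.
    apply: (noell (c5 r1 3 *: r0 + (- c5 r0 3) *: r1)); first exact: combL.
    - by apply/eqP => /freeL [/eqP]; rewrite (negPf h3).
    - by rewrite c5D !c5Z; ring.
    - rewrite c5D !c5Z.
      have -> : c5 r1 3 * c5 r0 4 + - c5 r0 3 * c5 r1 4 = - dl by rewrite /dl; ring.
      by rewrite d0 oppr0.
  apply: (noell r1) => //; first exact: row_sub.
  apply/eqP => r10; have := freeL 0 1; rewrite r10 scale0r scaler0 addr0.
  by move=> /(_ erefl) [_ /eqP]; rewrite oner_eq0.
pose f1 := (dl^-1 * c5 r1 4) *: r0 + (- (dl^-1 * c5 r0 4)) *: r1.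
pose f2 := (- (dl^-1 * c5 r1 3)) *: r0 + (dl^-1 * c5 r0 3) *: r1.
have f1L : (f1 <= L)%MS by apply: combL.
have f2L : (f2 <= L)%MS by apply: combL.
have f10 : c5 f1 0 = 0 by apply: inS.
have f20 : c5 f2 0 = 0 by apply: inS.
have f13 : c5 f1 3 = 1.
  rewrite c5D !c5Z; move: dn0; rewrite /dl => dn0; field; exact: dn0.
have f14 : c5 f1 4 = 0 by rewrite c5D !c5Z; ring.
have f23 : c5 f2 3 = 0 by rewrite c5D !c5Z; ring.
have f24 : c5 f2 4 = 1.
  rewrite c5D !c5Z; move: dn0; rewrite /dl => dn0; field; exact: dn0.
have Bf := BL _ _ f1L f2L.
pose p := c5 f1 1; pose s := c5 f1 2; pose r := c5 f2 1.
have f22 : c5 f2 2 = p.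
  move: Bf; rewrite /Bform f13 f14 f23 f24 !mulr0 mul0r mulr1 mul1r !addr0.
  by move/eqP; rewrite addr_eq0 oppE => /eqP <-.
have ef1 : f1 = v5 0 p s 1 0 by rewrite (v5E f1) f10 f13 f14.
have ef2 : f2 = v5 0 r p 0 1 by rewrite (v5E f2) f20 f23 f24 f22.
have rs : (r != 0) || (s != 0).
  apply: contraT; rewrite negb_or !negbK => /andP[/eqP r00 /eqP s0].
  have f1n0 : f1 != 0.
    by apply/eqP => e; move: f13; rewrite e c50 => /eqP; rewrite eq_sym oner_eq0.
  have f2n0 : f2 != 0.
    by apply/eqP => e; move: f24; rewrite e c50 => /eqP; rewrite eq_sym oner_eq0.
  have H1 : onH f1.
    split => //; split; first by rewrite subSigmaE f10.
    by rewrite /Qform f14 f13 -/s s0; ring.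
  have H2 : onH f2.
    split => //; split; first by rewrite subSigmaE f20.
    by rewrite /Qform f24 f23 -/r r00; ring.
  have f1ell : ~~ (f1 <= ell F)%MS by rewrite subellE f13 oner_eq0 andbF.
  have f2ell : ~~ (f2 <= ell F)%MS by rewrite subellE f24 oner_eq0 !andbF.
  have /andP[e1 _] := Pu _ f1L H1 f1ell.
  have /andP[_ e2] := Pu _ f2L H2 f2ell.
  have /sub_rVP[k hk] := submx_trans e1 e2.
  by move: f13; rewrite hk c5Z f23 mulr0 => /eqP; rewrite eq_sym oner_eq0.
have [rho hr] := sqrtF r.
have [sg hs] := sqrtF s.
have nN0 : nrm rho sg != 0.
  apply: Nnz; move: rs; apply: contraTT; rewrite negb_or !negbK.
  by rewrite -hr -hs => /andP[/eqP -> /eqP ->]; rewrite expr0n /= eqxx.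
have [a ha2] := sqrtF (nrm rho sg).
have an0 : a != 0 by apply: contraNneq nN0 => a0; rewrite -ha2 a0 expr0n.
exists a, ((p + rho * sg) / a), (rho / a), (sg / a).
have hn : nrm (rho / a) (sg / a) = 1.
  transitivity (nrm rho sg / a ^+ 2); first by rewrite /nrm; field.
  by rewrite -ha2 divff // expf_neq0.
split => //.
rewrite /L0 mk2_mul; apply: eq_mk2 => //.
- have -> : v5 0 0 0 1 0 *m (Mabcd al a ((p + rho * sg) / a) (rho / a) (sg / a))^T
     = (rho / a / a) *: f1 + (sg / a / a) *: f2.
    rewrite actE ef1 ef2; apply: eq5P; rewrite !c5D !c5Z !c5v5 //= -?hr -?hs.
    all: try by field.
  by apply: addmx_sub; apply: scalemx_sub.
- have -> : v5 0 1 0 0 1 *m (Mabcd al a ((p + rho * sg) / a) (rho / a) (sg / a))^T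
     = (al * (sg / a) / a) *: f1 + ((rho / a + sg / a) / a) *: f2.
    rewrite actE ef1 ef2; apply: eq5P; rewrite !c5D !c5Z !c5v5 //= -?hr -?hs.
    all: try by field.
    + set X := _ + _ *(rho ^+ 2).
      transitivity (X + 2%:R * (rho * al * sg ^+ 2 / a ^+ 2)); last by rewrite two0 mul0r addr0.
      rewrite /X; move: ha2; rewrite /nrm => ha2; field: ha2; done.
    + set X := _ + _ * p.
      transitivity (X + 2%:R * (sg * rho * (rho + sg) / a ^+ 2)); last by rewrite two0 mul0r addr0.
      rewrite /X; move: ha2; rewrite /nrm => ha2; field: ha2; done.
  by apply: addmx_sub; apply: scalemx_sub.
- apply: rank_mk2; rewrite !actE !c5v5 //=.
  set X := (_ - _).
  have -> : X = (a ^+ 2)^-1 * nrm (rho / a) (sg / a) - 2%:R * (al * (sg / a) ^+ 2 / a ^+ 2).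
    by rewrite /X /nrm; field.
  by rewrite two0 mul0r subr0 hn mulr1 invr_eq0 expf_neq0.
Qed.


Lemma preserve (g : 'M[F]_5) (L : 'M[F]_(2,5)) : inG al g -> inT L -> inT (act g L).
Proof.
move=> [a [b [c [d [an0 hn' ->]]]]] [[rkL [LS BL]] [P [PL [Pn0 [PS QP]] Pell Pu]]].
have hn : nrm c d = 1 := hn'.
have hi : nrm (c + d) d = 1 := nrm_inv hn.
have ai : a^-1 != 0 by rewrite invr_eq0.
have hl : Mabcd al a^-1 b (c + d) d *m Mabcd al a b c d = 1%:M := Minv_l b an0 hn.
have hr : Mabcd al a b c d *m Mabcd al a^-1 b (c + d) d = 1%:M := Minv_r b an0 hn.
set M := Mabcd al a b c d in hl hr *; set Mi := Mabcd al a^-1 b (c + d) d in hl hr.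
have fM : row_free M^T by apply/row_freeP; exists Mi^T; rewrite -trmx_mul hl trmx1.
have fMi : row_free Mi^T by apply/row_freeP; exists M^T; rewrite -trmx_mul hr trmx1.
have K1 (x : 'rV[F]_5) : x *m M^T *m Mi^T = x by rewrite -mulmxA -trmx_mul hl trmx1 mulmx1.
have K2 (x : 'rV[F]_5) : x *m Mi^T *m M^T = x by rewrite -mulmxA -trmx_mul hr trmx1 mulmx1.
rewrite /act; split; [split; [|split] | ].
- by rewrite /is_line mxrankMfree.
- apply/row_subP => i; rewrite row_mul subSigmaE act0 -subSigmaE.
  exact: submx_trans (row_sub i L) LS.
- move=> x y /submxP[Dx ->] /submxP[Dy ->]; rewrite !mulmxA Bform_act //.
  by apply: BL; apply: submxMl.
exists (P *m M^T); split.
- exact: submxMr.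
- split; first by rewrite mulmx_free_eq0.
  by split; [rewrite subSigmaE act0 -subSigmaE | rewrite Qform_act].
- by apply: contra Pell => h; rewrite -(K1 P); apply: ell_act.
move=> y yL yH yell.
have y'L : (y *m Mi^T <= L)%MS.
  by rewrite -[L](mulmx1) -trmx1 -hl trmx_mul mulmxA submxMr.
have y'H : onH (y *m Mi^T).
  case: yH => yn0 [yS Qy]; split; first by rewrite mulmx_free_eq0.
  by split; [rewrite subSigmaE act0 -subSigmaE | rewrite Qform_act].
have y'ell : ~~ (y *m Mi^T <= ell F)%MS.
  by apply: contra yell => h; rewrite -(K2 y); apply: ell_act.
have /eqmxP e := Pu _ y'L y'H y'ell.
have := eqmxMr M^T e; rewrite K2 => e'.
by apply/eqmxP.
Qed.

End S.

Unset Implicit Arguments.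
Set Strict Implicit.

Theorem lemma3p3 (F : finFieldType) (h : nat) (hq : #|F| = (2 ^ h)%N)
  (al : F) (hal : irreducible_poly ('X^2 + 'X + al%:P)) :
  (forall (g : 'M[F]_5) (L : 'M[F]_(2,5)), inG al g -> inT L -> inT (act g L)) /\
  (forall L1 L2 : 'M[F]_(2,5), inT L1 -> inT L2 ->
     exists g : 'M[F]_5, inG al g /\ (act g L1 == L2)%MS).
Proof.
have ch2 : (2%N \in [pchar F]) by apply: (card_finPcharP hq).
split.
  by move=> g L hg hL; apply: (preserve ch2 hg hL).
move=> L1 L2 h1 h2.
have [a1 [b1 [c1 [d1 [a10 n1 e1]]]]] := orbit ch2 hal h1.
have [a2 [b2 [c2 [d2 [a20 n2 e2]]]]] := orbit ch2 hal h2.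
exists (Mabcd al a2 b2 c2 d2 * Mabcd al a1^-1 b1 (c1 + d1) d1); split.
  rewrite (Mprod al ch2) ?invr_eq0 //.
  do 4 eexists; split; last reflexivity.
  - by rewrite mulf_neq0 ?invr_eq0.
  - exact: (nrm_prod ch2 n2 (nrm_inv ch2 n1)).
have hl := Minv_l ch2 b1 a10 n1.
have /eqmxP E1 := e1.
have := eqmxMr (Mabcd al a1^-1 b1 (c1 + d1) d1)^T E1.
rewrite -mulmxA -trmx_mul.
have -> : Mabcd al a1^-1 b1 (c1 + d1) d1 *m Mabcd al a1 b1 c1 d1 = 1%:M := hl.
rewrite trmx1 mulmx1 => E1'.
have E := eqmxMr (Mabcd al a2 b2 c2 d2)^T E1'.
rewrite /act.
have -> : (Mabcd al a2 b2 c2 d2 * Mabcd al a1^-1 b1 (c1 + d1) d1)^T =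
  (Mabcd al a1^-1 b1 (c1 + d1) d1)^T *m (Mabcd al a2 b2 c2 d2)^T :=
  trmx_mul (Mabcd al a2 b2 c2 d2) (Mabcd al a1^-1 b1 (c1 + d1) d1).
rewrite mulmxA; apply/eqmxP.
exact: eqmx_trans (eqmx_sym E) (eqmxP e2).
Qed.
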